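(* Let $t\ge 2$, $m\ge 1$ and $k_1,\dots,k_t\ge 2$ be integers. If a finite simple graph $G$ contains an induced subgraph isomorphic to the vertex-disjoint union $P_{k_1}\cup\cdots\cup P_{k_t}\cup mP_1$ of paths on $k_1,\dots,k_t$ vertices and $m$ isolated vertices, then \[\mathrm{mur}(G)\ge \Big(\sum_{i=1}^t k_i\Big)-t.\]
   Context: For a finite simple undirected graph $G$ on vertices $v_1,\dots,v_n$, let $A_G$ be its $(0,1)$-adjacency matrix, $D_G=\mathrm{diag}(d_1,\dots,d_n)$ with $d_i$ the degree of $v_i$, $I$ the $n\times n$ identity matrix and $J$ the $n\times n$ all-ones matrix. A universal adjacency matrix of $G$ is any matrix $\alpha A_G+\beta I+\gamma J+\delta D_G$ with real scalars $\alpha,\beta,\gamma,\delta$ and $\alpha\neq 0$. The minimum universal rank $\mathrm{mur}(G)$ is the minimum rank over all universal adjacency matrices of $G$. *)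

(* Defs.v *)
From HB Require Import structures.
From mathcomp Require Import all_boot all_order all_algebra.
From mathcomp Require Import boolp reals.
Set Implicit Arguments. Unset Strict Implicit. Unset Printing Implicit Defensive.
Import Order.TTheory GRing.Theory Num.Theory.

Definition simple_graph (n : nat) (G : rel 'I_n) : Prop :=
  symmetric G /\ irreflexive G.

Local Open Scope ring_scope.

Section Mats.
Variable R : realType.

Definition adjmx (n : nat) (G : rel 'I_n) : 'M[R]_n :=
  \matrix_(i, j) (G i j)%:R.

Definition degmx (n : nat) (G : rel 'I_n) : 'M[R]_n :=
  \matrix_(i, j) ((i == j)%:R * (#|[pred k | G i k]|)%:R).

Definition Jmx (n : nat) : 'M[R]_n := const_mx 1.

Definition univ_adj (n : nat) (G : rel 'I_n) (a b c d : R) : 'M[R]_n :=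
  a *: adjmx G + b%:M + c *: Jmx n + d *: degmx G.

Definition attained_rank (n : nat) (G : rel 'I_n) (r : nat) : bool :=
  `[< exists a b c d : R, a != 0 /\ \rank (univ_adj G a b c d) = r >].

Lemma attained_rank_ex (n : nat) (G : rel 'I_n) : exists r, attained_rank G r.
Proof.
exists (\rank (univ_adj G 1 0 0 0)); apply/asboolP.
by exists 1, 0, 0, 0; split; [exact: oner_neq0|].
Qed.

Definition mur (n : nat) (G : rel 'I_n) : nat := ex_minn (attained_rank_ex G).
End Mats.

Local Close Scope ring_scope.

(* Vertex-disjoint union of paths with s_1, ..., s_r vertices, on vertex set
   'I_(sumn s): consecutive blocks of sizes s_1, ..., s_r, each block a path
   in the natural order. *)
Definition block_starts (s : seq nat) : seq nat :=
  [seq sumn (take i s) | i <- iota 0 (size s)].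

Definition linforest (s : seq nat) : rel 'I_(sumn s) :=
  fun u v => ((u.+1 == v :> nat) || (v.+1 == u :> nat))
             && (maxn u v \notin block_starts s).

Definition paths_union (ks : seq nat) (m : nat) := @linforest (ks ++ nseq m 1).

Definition induced_sub (N n : nat) (H : rel 'I_N) (G : rel 'I_n) : Prop :=
  exists f : 'I_N -> 'I_n, injective f /\ forall u v, G (f u) (f v) = H u v.
Arguments linforest s u v : clear implicits.
Arguments paths_union ks m u v : clear implicits.

(* Main.v *)
Require Import Defs.
From mathcomp Require Import all_boot all_order all_algebra.
From mathcomp Require Import boolp reals.
From mathcomp Require Import ring lra zify.
Import Order.TTheory GRing.Theory Num.Theory.
Local Open Scope ring_scope.

Definition prd (N : nat) (v : 'I_N) : 'I_N :=
  Ordinal (leq_ltn_trans (leq_pred v) (ltn_ord v)).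
Arguments prd {N}.

Lemma univ_adjE (R : realType) n (G : rel 'I_n) (a b c d : R) x y :
  univ_adj G a b c d x y =
  a * (G x y)%:R + (x == y)%:R * (b + d * (#|[pred k | G x k]|)%:R) + c.
Proof.
rewrite !mxE; case: (x == y); rewrite /= ?mulr1n ?mulr0n; ring.
Qed.

Lemma enum_val_lt N (S : {pred 'I_N}) (i j : 'I_#|S|) :
  (i < j)%N -> (val (Order.enum_val i) < val (Order.enum_val j))%N.
Proof.
move=> lij.
have := @Order.EnumVal.le_enum_val _ _ (@le_total _ 'I_N) S j i.
move=> H.
have : ~~ (j <= i)%N by rewrite -ltnNge.
rewrite -[(j <= i)%N]/(j <= i)%O -H.
by rewrite ltnNge.
Qed.

Lemma key (R : realType) (n N : nat) (G : rel 'I_n) (H : rel 'I_N)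
  (f : 'I_N -> 'I_n) (w : 'I_N) (S : {pred 'I_N}) (a b c d : R) :
  a != 0 -> injective f -> (forall u v, G (f u) (f v) = H u v) ->
  (forall v, H w v = false) -> (forall v, v \in S -> v != w) ->
  (forall v, v \in S -> (0 < v)%N /\ H (prd v) v) ->
  (forall u v, H u v -> (u.+1 == v :> nat) || (v.+1 == u :> nat)) ->
  (#|S| <= \rank (univ_adj G a b c d))%N.
Proof.
move=> a0 finj fG Hw Sw SH Hadj.
set M := univ_adj G a b c d.
pose e := fun i : 'I_#|S| => @Order.enum_val _ _ S i.
pose L := colsub (f \o e) (rowsub (f \o @prd N \o e) M - rowsub (fun _ => f w) M).
have rkL : (\rank L <= \rank M)%N.
  have -> : L = (rowsub (f \o @prd N \o e) 1%:M - rowsub (fun _ => f w) 1%:M) *m M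
                *m colsub (f \o e) 1%:M.
    by rewrite mulmx_colsub mulmx1 mulmxBl -!rowsubE.
  exact: leq_trans (mxrankM_maxl _ _) (mxrankM_maxr _ _).
have eS : forall i, e i \in S by move=> i; exact: Order.EnumVal.enum_valP.
have Lij : forall i j, L i j = M (f (prd (e i))) (f (e j)) - M (f w) (f (e j)).
  by move=> i j; rewrite !mxE.
have Mw : forall j, M (f w) (f (e j)) = c.
  move=> j; rewrite /M univ_adjE fG Hw (inj_eq finj) eq_sym (negbTE (Sw _ (eS j))).
  by rewrite mul0r mulr0 !add0r.
have trig : is_trig_mx L.
  apply/is_trig_mxP => i j lij.
  have lt : (e i < e j)%N := @enum_val_lt _ S i j lij.
  have [pos _] := SH _ (eS i).
  rewrite Lij Mw /M univ_adjE fG (inj_eq finj).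
  have -> : (prd (e i) == e j) = false.
    apply/negbTE; apply/negP => /eqP/(congr1 val) /= E.
    lia.
  have -> : H (prd (e i)) (e j) = false.
    apply/negbTE/negP => /Hadj /orP [] /eqP /= E.
      lia.
    lia.
  by rewrite mulr0 mul0r !add0r subrr.
have rkLf : \rank L = #|S|.
  apply: mxrank_unit; rewrite unitmxE (det_trig trig) unitfE.
  have -> : \prod_(i < #|S|) L i i = \prod_(i < #|S|) a.
    apply: eq_bigr => i _.
    have [pos Hi] := SH _ (eS i).
    rewrite Lij Mw /M univ_adjE fG Hi (inj_eq finj).
    have -> : (prd (e i) == e i) = false.
      apply/negbTE; apply/negP => /eqP/(congr1 val) /=.
      lia.
    by rewrite mul0r mulr1 addr0 addrK.
  by rewrite prodr_const expf_neq0.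
by rewrite -rkLf.
Qed.
Local Close Scope ring_scope.
Theorem lemma9 (R : realType) (n : nat) (G : rel 'I_n) (ks : seq nat) (m : nat) :
  simple_graph G ->
  (2 <= size ks)%N -> (1 <= m)%N -> all (fun k => 2 <= k)%N ks ->
  induced_sub (paths_union ks m) G ->
  (sumn ks - size ks <= mur R G)%N.
Proof.
move=> _ hks hm _ [f [finj fG]].
rewrite /mur; case: ex_minnP => r /asboolP [a [b [c [d [a0 <-]]]]] _.
move: f finj fG; rewrite /paths_union.
set s := ks ++ nseq m 1.
have Ns : sumn s = sumn ks + m by rewrite sumn_cat sumn_nseq mul1n.
have sz : size s = size ks + m by rewrite size_cat size_nseq.
set N := sumn s.
set bs := block_starts s.
move=> f finj fG.
have Npos : (0 < N)%N by rewrite /N Ns; lia.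
have wlt : (N.-1 < N)%N by lia.
pose w : 'I_N := Ordinal wlt.
have wbs : val w \in bs.
  apply/mapP; exists (size ks + m - 1); first by rewrite mem_iota sz; lia.
  rewrite take_cat ifF; last by apply/negbTE; rewrite -leqNgt; lia.
  rewrite take_nseq; last lia.
  rewrite sumn_cat sumn_nseq mul1n /= /N Ns.
  rewrite -subn1; lia.
have Hw : forall v, linforest s w v = false.
  move=> v; rewrite /linforest.
  case: eqP => /= [E|_]; first by have := ltn_ord v; rewrite -E /=; lia.
  case: eqP => //= E.
  have -> : maxn w v = w by apply/maxn_idPl; rewrite /w /= -E leqnSn.
  by rewrite wbs.
pose S := [pred v : 'I_N | (0 < v)%N && (val v \notin bs)].
have := @key R n N G (linforest s) f w S a b c d a0 finj fG Hw.
have Sw : forall v, v \in S -> v != w.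
  move=> v /andP [_ vb]; apply/negP => /eqP E; by rewrite E wbs in vb.
have SH : forall v, v \in S -> (0 < v)%N /\ linforest s (prd v) v.
  move=> v /andP [vp vb]; split => //; rewrite /linforest /=.
  have -> : maxn v.-1 v = v by apply/maxn_idPr; lia.
  rewrite vb andbT; apply/orP; left; apply/eqP; exact: prednK.
have Hadj : forall u v, linforest s u v -> (u.+1 == v :> nat) || (v.+1 == u :> nat).
  by move=> u v /andP [].
move=> /(_ Sw SH Hadj) HS.
apply: leq_trans HS.
pose B := [pred v : 'I_N | (0 < v)%N && (val v \in bs)].
have bsE : bs = 0 :: behead bs.
  by rewrite /bs /block_starts; case: (s) sz => [|x s'] /=; [lia|].
have szbs : size bs = size s by rewrite /bs /block_starts size_map size_iota.
have cB : (#|B| <= (size s).-1)%N.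
  have <- : size (behead bs) = (size s).-1 by rewrite size_behead szbs.
  rewrite cardE -(size_map val).
  apply: uniq_leq_size; first by rewrite map_inj_uniq ?enum_uniq //; exact: val_inj.
  move=> x /mapP [v]; rewrite mem_enum => /andP [vp vb] ->.
  by move: vb; rewrite bsE inE => /orP [/eqP E|//]; move: vp; rewrite E.
have cP : (N.-1 <= #|S| + #|B|)%N.
  have cP1 : #|[pred v : 'I_N | (0 < v)%N]| = N.-1.
    have := cardC1 (Ordinal Npos); rewrite card_ord => <-.
    apply: eq_card => v; rewrite !inE /=.
    by rewrite -val_eqE /= lt0n.
  rewrite -cP1 -cardUI.
  apply: leq_trans (leq_addr _ _).
  apply: subset_leq_card; apply/subsetP => v; rewrite !inE /= => vp.
  by rewrite vp /=; case: (val v \in bs).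
move: cB cP; rewrite sz; move: #|S| #|B| => x y. have NN : N = sumn ks + m := Ns. rewrite NN. lia.
Qed.
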